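(* Let $a\geq 2$ and $0\leq b<a$ be integers, and let $\mathbb{L}$ be a skew field. Let $B$ be a $b$-space of $\mathrm{PG}(a,\mathbb{L})$, let $B_1,B_2$ be subspaces of $\mathrm{PG}(a,\mathbb{L})$ of dimension at most $b-1$, and let $B_3$ be a subspace of dimension at most $b-2$ (if $b=0$, $B_3$ is the empty subspace). Then there exists an $(a-b-1)$-space $C$ of $\mathrm{PG}(a,\mathbb{L})$ that is disjoint from $B\cup B_1\cup B_2\cup B_3$ (i.e. shares no point with it).
   Context: $\mathrm{PG}(a,\mathbb{L})$ is the projective space of an $(a+1)$-dimensional vector space over $\mathbb{L}$; an $m$-space is an $(m+1)$-dimensional vector subspace, viewed as its set of points ($1$-dimensional subspaces); the empty subspace has dimension $-1$. *)

(* Defs.v *)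
From mathcomp Require Import all_boot all_algebra.
Set Implicit Arguments. Unset Strict Implicit. Unset Printing Implicit Defensive.
Import GRing.Theory.
Local Open Scope ring_scope.

Definition skew_field (L : unitRingType) : Prop :=
  forall x : L, x != 0 -> x \is a GRing.unit.

Definition in_span (L : pzRingType) (V : lmodType L) (k : nat)
  (f : 'I_k -> V) (v : V) : Prop :=
  exists c : 'I_k -> L, v = \sum_(i < k) c i *: f i.

Definition free_family (L : pzRingType) (V : lmodType L) (k : nat)
  (f : 'I_k -> V) : Prop :=
  forall c : 'I_k -> L, \sum_(i < k) c i *: f i = 0 -> forall i, c i = 0.

(* A projective m-space of
   PG(a,L) is a vector subspace of L^(a+1) of vector dimension m+1; the
   empty projective subspace (dimension -1) is the zero vector subspace
   (vector dimension 0). A point of the projective subspace S is a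
   1-dimensional vector subspace contained in S, so two projective
   subspaces share no point iff their vector subspaces meet only in 0. *)
Definition vsub_of_dim (L : pzRingType) (V : lmodType L) (S : V -> Prop)
  (k : nat) : Prop :=
  exists f : 'I_k -> V, free_family f /\ forall v, S v <-> in_span f v.

(* Main.v *)
Require Import Defs.
From mathcomp Require Import all_boot all_algebra zify.
Set Implicit Arguments. Unset Strict Implicit. Unset Printing Implicit Defensive.
Import GRing.Theory.
Local Open Scope ring_scope.

Section Span.
Variable L : unitRingType.

Fixpoint inspan n (s : seq 'rV[L]_n) (v : 'rV[L]_n) : Prop :=
  if s is u :: s' then exists a, inspan s' (v - a *: u) else v = 0.

Definition linmap n m (F : 'rV[L]_n -> 'rV[L]_m) :=
  forall a x y, F (a *: x + y) = a *: F x + F y.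

Lemma linmap0 n m (F : 'rV[L]_n -> 'rV[L]_m) : linmap F -> F 0 = 0.
Proof.
move=> hF; have := hF (-1) 0 0; by rewrite scaler0 addr0 scaleN1r addNr.
Qed.

Lemma inspan0 n (s : seq 'rV[L]_n) : inspan s 0.
Proof. by elim: s => [|u s IH] //=; exists 0; rewrite scale0r subr0. Qed.

Lemma inspanD n (s : seq 'rV[L]_n) x y : inspan s x -> inspan s y -> inspan s (x + y).
Proof.
elim: s x y => [|u s IH] x y /=; first by move=> -> ->; rewrite addr0.
move=> [a ha] [b hb]; exists (a + b).
have -> : x + y - (a + b) *: u = (x - a *: u) + (y - b *: u).
  by rewrite scalerDl opprD addrACA.
exact: IH.
Qed.

Lemma inspanZ n (s : seq 'rV[L]_n) c x : inspan s x -> inspan s (c *: x).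
Proof.
elim: s x => [|u s IH] x /=; first by move=> ->; rewrite scaler0.
move=> [a ha]; exists (c * a).
by rewrite -scalerA -scalerBr; apply: IH.
Qed.

Lemma inspanN n (s : seq 'rV[L]_n) x : inspan s x -> inspan s (- x).
Proof. by move=> h; rewrite -scaleN1r; apply: inspanZ. Qed.

Lemma inspan_mem n (s : seq 'rV[L]_n) u : u \in s -> inspan s u.
Proof.
elim: s => [|w s IH] //= ; rewrite inE => /orP [/eqP ->|hu].
  by exists 1; rewrite scale1r subrr; apply: inspan0.
by exists 0; rewrite scale0r subr0; apply: IH.
Qed.

Lemma inspan_cat n (s t : seq 'rV[L]_n) x y :
  inspan s x -> inspan t y -> inspan (s ++ t) (x + y).
Proof.
elim: s x => [|u s IH] x /=; first by move=> -> ; rewrite add0r.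
move=> [a ha] hy; exists a.
have -> : x + y - a *: u = (x - a *: u) + y by rewrite addrAC.
exact: IH.
Qed.

Lemma inspan_catl n (s t : seq 'rV[L]_n) x : inspan s x -> inspan (s ++ t) x.
Proof. by move=> h; rewrite -[x]addr0; apply: inspan_cat => //; apply: inspan0. Qed.

Lemma inspan_catr n (s t : seq 'rV[L]_n) y : inspan t y -> inspan (s ++ t) y.
Proof. by move=> h; rewrite -[y]add0r; apply: inspan_cat => //; apply: inspan0. Qed.

Lemma inspan_map n m (F : 'rV[L]_n -> 'rV[L]_m) (s : seq 'rV[L]_n) v :
  linmap F -> inspan s v -> inspan (map F s) (F v).
Proof.
move=> hF; elim: s v => [|u s IH] v /=; first by move=> ->; apply: linmap0.
move=> [a ha]; exists a; have := IH _ ha.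
by rewrite -scaleNr addrC hF scaleNr addrC.
Qed.

Lemma inspan_sum n (I : Type) (r : seq I) (f : I -> 'rV[L]_n) (c : I -> L) :
  inspan (map f r) (\sum_(i <- r) c i *: f i).
Proof.
elim: r => [|i r IH] /=; first by rewrite big_nil.
by exists (c i); rewrite big_cons addrAC subrr add0r.
Qed.

Definition lin n (phi : 'I_n -> L) (x : 'rV[L]_n) : L := \sum_j x 0 j * phi j.

Lemma linD n (phi : 'I_n -> L) a x y : lin phi (a *: x + y) = a * lin phi x + lin phi y.
Proof.
rewrite /lin mulr_sumr -big_split /=; apply: eq_bigr => j _.
by rewrite !mxE mulrDl mulrA.
Qed.

Lemma lin0 n (phi : 'I_n -> L) : lin phi 0 = 0.
Proof. by rewrite /lin big1 // => j _; rewrite mxE mul0r. Qed.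

Lemma linB n (phi : 'I_n -> L) x y : lin phi (x - y) = lin phi x - lin phi y.
Proof.
have -> : x - y = (-1) *: y + x by rewrite scaleN1r addrC.
by rewrite linD mulN1r addrC.
Qed.

Lemma linZ n (phi : 'I_n -> L) a x : lin phi (a *: x) = a * lin phi x.
Proof. by rewrite -[a *: x]addr0 linD lin0 addr0. Qed.

Lemma inspan_lin n (phi : 'I_n -> L) (s : seq 'rV[L]_n) v :
  inspan s v -> (forall x, x \in s -> lin phi x = 0) -> lin phi v = 0.
Proof.
elim: s v => [|u s IH] v /=; first by move=> -> _; apply: lin0.
move=> [a ha] hs.
have h1 := IH _ ha (fun x hx => hs x (@mem_behead _ (u :: s) _ hx)).
move: h1; by rewrite linB linZ (hs u (mem_head _ _)) mulr0 subr0.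
Qed.


Definition dropc n (i : 'I_n.+1) (x : 'rV[L]_n.+1) : 'rV[L]_n := \row_j x 0 (lift i j).

Lemma dropc_lin n (i : 'I_n.+1) : linmap (dropc i).
Proof. by move=> a x y; apply/rowP => j; rewrite !mxE. Qed.

Lemma dropcD n (i : 'I_n.+1) x y : dropc i (x + y) = dropc i x + dropc i y.
Proof. by apply/rowP => j; rewrite !mxE. Qed.

Lemma dropcN n (i : 'I_n.+1) x : dropc i (- x) = - dropc i x.
Proof. by apply/rowP => j; rewrite !mxE. Qed.

Lemma dropc0 n (i : 'I_n.+1) : dropc i 0 = 0.
Proof. by apply/rowP => j; rewrite !mxE. Qed.

Definition insc n (phi : 'I_n.+1 -> L) (i : 'I_n.+1) (w : 'rV[L]_n) : 'rV[L]_n.+1 :=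
  \row_j (if unlift i j is Some j' then w 0 j'
          else - (\sum_j' w 0 j' * phi (lift i j')) * (phi i)^-1).

Lemma dropc_insc n (phi : 'I_n.+1 -> L) i w : dropc i (insc phi i w) = w.
Proof. by apply/rowP => j; rewrite !mxE liftK. Qed.

Lemma lin_split n (phi : 'I_n.+1 -> L) i x :
  lin phi x = x 0 i * phi i + \sum_j x 0 (lift i j) * phi (lift i j).
Proof. by rewrite /lin (bigD1_ord i). Qed.

Lemma lin_insc n (phi : 'I_n.+1 -> L) i w : phi i \is a GRing.unit ->
  lin phi (insc phi i w) = 0.
Proof.
move=> hu; rewrite /insc (lin_split _ i) !mxE unlift_none divrK //.
apply/eqP; rewrite addrC subr_eq0; apply/eqP; apply: eq_bigr => j _.
by rewrite mxE liftK.
Qed.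

Definition xt n (phi : 'I_n.+1 -> L) (i : 'I_n.+1) (t : L) : 'rV[L]_n.+1 :=
  (t * (phi i)^-1) *: \row_j ((j == i)%:R).

Lemma lin_xt n (phi : 'I_n.+1 -> L) i t : phi i \is a GRing.unit ->
  lin phi (xt phi i t) = t.
Proof.
move=> hu; rewrite /xt linZ (lin_split _ i) !mxE eqxx mul1r big1 ?addr0 ?divrK //.
by move=> j _; rewrite !mxE eq_sym (negbTE (neq_lift _ _)) mul0r.
Qed.


Lemma linDD n (phi : 'I_n -> L) x y : lin phi (x + y) = lin phi x + lin phi y.
Proof. by rewrite -[x]scale1r linD mul1r scale1r. Qed.

Lemma linmap_comp n m k (F : 'rV[L]_n -> 'rV[L]_m) (G : 'rV[L]_m -> 'rV[L]_k) :
  linmap F -> linmap G -> linmap (fun x => G (F x)).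
Proof. by move=> hF hG a x y; rewrite hF hG. Qed.

Definition elimv n (phi : 'I_n -> L) (u x : 'rV[L]_n) : 'rV[L]_n :=
  x - (lin phi x * (lin phi u)^-1) *: u.

Lemma elimv_lin n (phi : 'I_n -> L) u : linmap (elimv phi u).
Proof.
move=> a x y; rewrite /elimv linD mulrDl scalerDl scalerBr scalerA mulrA.
by rewrite opprD addrACA.
Qed.

Lemma elimv_u n (phi : 'I_n -> L) u : lin phi u \is a GRing.unit -> elimv phi u u = 0.
Proof. by move=> hu; rewrite /elimv mulrV // scale1r subrr. Qed.

Lemma lin_elimv n (phi : 'I_n -> L) u x : lin phi u \is a GRing.unit ->
  lin phi (elimv phi u x) = 0.
Proof. by move=> hu; rewrite /elimv linB linZ divrK // subrr. Qed.

Definition wt n (g : seq 'rV[L]_n) : nat := (2 ^ count (fun x : 'rV[L]_n => x != 0%R) g)%N.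

Definition oW n (o : option ('rV[L]_n * seq 'rV[L]_n)) : nat :=
  if o is Some c then wt c.2 else 0%N.

Definition slice1 n (phi : 'I_n.+1 -> L) (i : 'I_n.+1) (t : L)
    (c : 'rV[L]_n.+1 * seq 'rV[L]_n.+1) : option ('rV[L]_n * seq 'rV[L]_n) :=
  let q := xt phi i t - c.1 in
  if has (fun x => lin phi x != 0) c.2 then
    let u := nth 0 c.2 (find (fun x => lin phi x != 0) c.2) in
    Some (- dropc i (elimv phi u q), map (fun x => dropc i (elimv phi u x)) c.2)
  else if lin phi c.1 == t then Some (- dropc i q, map (dropc i) c.2) else None.

Hypothesis HL : skew_field L.

Lemma slice_mem n (phi : 'I_n.+1 -> L) i t w c : phi i \is a GRing.unit ->
  inspan c.2 (xt phi i t + insc phi i w - c.1) ->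
  exists c', slice1 phi i t c = Some c' /\ inspan c'.2 (w - c'.1).
Proof.
case: c => p g hu /=; set q := xt phi i t - p.
have -> : xt phi i t + insc phi i w - p = insc phi i w + q.
  by rewrite /q addrA [xt _ _ _ + _]addrC.
move=> h; rewrite /slice1 /= -/q.
case: ifP => hh.
  set u := nth 0 g _.
  have hu' : lin phi u \is a GRing.unit by apply: HL; apply: (nth_find 0 hh).
  eexists; split; first reflexivity; rewrite /= opprK.
  have := inspan_map (linmap_comp (elimv_lin phi u) (dropc_lin i)) h.
  rewrite /elimv linDD lin_insc // add0r -addrA -/(elimv phi u q) dropcD dropc_insc.
  by [].
have hl : lin phi (insc phi i w + q) = 0.
  apply: (inspan_lin h) => x hx; move/hasPn: (negbT hh) => /(_ x hx).
  by rewrite negbK => /eqP.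
move: hl; rewrite linDD lin_insc // add0r /q linB lin_xt // => /eqP.
rewrite subr_eq0 eq_sym => ->.
eexists; split; first reflexivity; rewrite /= opprK.
by have := inspan_map (dropc_lin i) h; rewrite dropcD dropc_insc.
Qed.

Lemma count_lt (T : eqType) (a b : pred T) (s : seq T) x :
  (forall y, a y -> b y) -> x \in s -> b x -> ~~ a x -> (count a s < count b s)%N.
Proof.
move=> hab; elim: s => [|y s IH] //=; rewrite inE => /orP [/eqP <-|hx] hb ha.
  rewrite hb (negbTE ha) add0n add1n ltnS; exact: sub_count.
have := IH hx hb ha; case ay: (a y); first by rewrite (hab _ ay).
by case: (b y) => /=; rewrite ?add0n ?add1n // => h; apply: ltnW.
Qed.

Lemma slice_wtA n (phi : 'I_n.+1 -> L) i t c :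
  ~~ has (fun x => lin phi x != 0) c.2 ->
  oW (slice1 phi i t c) = (if lin phi c.1 == t then wt (map (dropc i) c.2) else 0%N).
Proof. by rewrite /slice1 => /negbTE -> /=; case: ifP. Qed.

Lemma slice_wtB n (phi : 'I_n.+1 -> L) i t c :
  has (fun x => lin phi x != 0) c.2 -> (oW (slice1 phi i t c) * 2 <= wt c.2)%N.
Proof.
rewrite /slice1 => hh; rewrite hh /=.
set u := nth 0 c.2 _.
have hu' : lin phi u \is a GRing.unit by apply: HL; apply: (nth_find 0 hh).
rewrite /wt -expnSr leq_exp2l // count_map.
apply: (@count_lt _ _ _ _ u); last first.
- by rewrite /= elimv_u // dropc0 eqxx.
- apply/negP => /eqP u0; move: hu'; rewrite u0 lin0.
  by rewrite unitr0.
- by apply: mem_nth; rewrite -has_find.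
move=> y /=; apply: contraNN => /eqP ->.
by rewrite /elimv lin0 mul0r scale0r subr0 dropc0.
Qed.

Lemma wt_drop n (i : 'I_n.+1) (g : seq 'rV[L]_n.+1) : (wt (map (dropc i) g) <= wt g)%N.
Proof.
rewrite /wt leq_exp2l // count_map; apply: sub_count => y /=.
by apply: contraNN => /eqP ->; rewrite dropc0.
Qed.

Lemma sum_pmap n (f : 'rV[L]_n.+1 * seq 'rV[L]_n.+1 -> option ('rV[L]_n * seq 'rV[L]_n)) s :
  (\sum_(c <- pmap f s) wt c.2 = \sum_(c <- s) oW (f c))%N.
Proof.
elim: s => [|x s IH] /=; first by rewrite !big_nil.
by rewrite big_cons; case: (f x) => [c|] /=; rewrite ?big_cons IH.
Qed.


Definition e0f n : 'I_n.+1 -> L := fun j => (j == ord0)%:R.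

Lemma lin_e0 n (x : 'rV[L]_n.+1) : lin (@e0f n) x = x 0 ord0.
Proof.
rewrite (lin_split _ ord0) /e0f eqxx mulr1 big1 ?addr0 // => j _.
by rewrite eq_sym (negbTE (neq_lift _ _)) mulr0.
Qed.

Lemma AV n (cs : seq ('rV[L]_n * seq 'rV[L]_n)) :
  (\sum_(c <- cs) wt c.2 < 2 ^ n)%N ->
  exists w, forall c, c \in cs -> ~ inspan c.2 (w - c.1).
Proof.
elim: n cs => [|n IH] cs.
  case: cs => [|c cs]; first by move=> _; exists 0.
  by rewrite big_cons /wt expn0 ltnS leqn0 addn_eq0 expn_eq0.
set phi := @e0f n.
have hu : phi ord0 \is a GRing.unit by rewrite /phi /e0f eqxx unitr1.
have step : forall t, (\sum_(c <- pmap (slice1 phi ord0 t) cs) wt c.2 < 2 ^ n)%N ->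
    exists w, forall c, c \in cs -> ~ inspan c.2 (w - c.1).
  move=> t /IH [w hw]; exists (xt phi ord0 t + insc phi ord0 w) => c hc hin.
  have [c' [e hc']] := slice_mem hu hin.
  apply: (hw c') hc'; rewrite mem_pmap -e; exact: map_f.
have key : (\sum_(c <- pmap (slice1 phi ord0 0) cs) wt c.2 +
            \sum_(c <- pmap (slice1 phi ord0 1) cs) wt c.2 <= \sum_(c <- cs) wt c.2)%N.
  rewrite !sum_pmap -big_split /=; apply: leq_sum => c _.
  case hh: (has (fun x => lin phi x != 0) c.2).
    have h0 := slice_wtB ord0 0 hh; have h1 := slice_wtB ord0 1 hh.
    move: h0 h1; set A := oW _; set B := oW _; set C := wt _; lia.
  rewrite !slice_wtA ?hh //.
  case: ifP => [/eqP e|_]; last by rewrite add0n; case: ifP => _ //; apply: wt_drop.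
  rewrite e eq_sym (negbTE (oner_neq0 L)) addn0; apply: wt_drop.
move=> hs.
case: (ltnP (\sum_(c <- pmap (slice1 phi ord0 0) cs) wt c.2) (2 ^ n)) => h0.
  exact: (step 0).
apply: (step 1); move: hs key h0; rewrite expnS.
set S0 := (\sum_(c <- _) _)%N; set S1 := (\sum_(c <- _) _)%N; set S := (\sum_(c <- _) _)%N.
set P := (2 ^ n)%N; lia.
Qed.


Definition extphi n (phi' : 'I_n -> L) (c : L) : 'I_n.+1 -> L :=
  fun j => if unlift ord0 j is Some j' then phi' j' else c.

Lemma lin_ext n (phi' : 'I_n -> L) c x :
  lin (extphi phi' c) x = x 0 ord0 * c + lin phi' (dropc ord0 x).
Proof.
rewrite (lin_split _ ord0) /extphi unlift_none; congr (_ + _).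
by apply: eq_bigr => j _; rewrite liftK mxE.
Qed.

Lemma Nlem n (h : seq 'rV[L]_n) : (size h < n)%N ->
  exists phi : 'I_n -> L, (exists i, phi i != 0) /\ forall x, x \in h -> lin phi x = 0.
Proof.
elim: n h => [|n IH] h; first by rewrite ltn0.
move=> hs; set e := @e0f n.
case hh: (has (fun x => lin e x != 0) h); last first.
  exists e; split; first by exists ord0; rewrite /e /e0f eqxx oner_neq0.
  move=> x hx; move/hasPn: (negbT hh) => /(_ x hx).
  by rewrite negbK => /eqP.
pose u := nth 0 h (find (fun x => lin e x != 0) h).
have hu : lin e u \is a GRing.unit by apply: HL; apply: (nth_find 0 hh).
have uin : u \in h by apply: mem_nth; rewrite -has_find.
set G := fun x => dropc ord0 (elimv e u x).
have hs' : (size (map G (rem u h)) < n)%N.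
  rewrite size_map size_rem //; have := hh; rewrite has_find => hf; move: hf hs; set k := find _ _; set m := size h.
  by case: m => [|m] /=; [rewrite ltn0 | move=> _].
have [phi' [[i' hi'] hphi']] := IH _ hs'.
exists (extphi phi' (- (lin e u)^-1 * lin phi' (dropc ord0 u))); split.
  by exists (lift ord0 i'); rewrite /extphi liftK.
have hu0 : lin (extphi phi' (- (lin e u)^-1 * lin phi' (dropc ord0 u))) u = 0.
  by rewrite lin_ext -lin_e0 mulrA mulrN mulrV // mulN1r addNr.
move=> x hx; case: (eqVneq x u) => [-> //|hxu].
have hxr : x \in rem u h := rem_mem hxu hx.
have -> : x = elimv e u x + (lin e x * (lin e u)^-1) *: u by rewrite /elimv subrK.
rewrite linDD linZ hu0 mulr0 addr0 lin_ext -lin_e0 lin_elimv // mul0r add0r.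
by apply: hphi'; apply: (map_f G hxr).
Qed.

Lemma AVOID n (h : seq 'rV[L]_n) (gs : seq (seq 'rV[L]_n)) :
  (size h < n)%N -> (\sum_(g <- gs) wt g < 2 ^ n)%N ->
  exists v, ~ inspan h v /\ forall g, g \in gs -> ~ inspan g v.
Proof.
case: n h gs => [|n] h gs hs hw; first by rewrite ltn0 in hs.
have [phi [[i hi] hphi]] := Nlem hs.
have hu : phi i \is a GRing.unit := HL hi.
set cs := map (fun g => (0 : 'rV[L]_n.+1, g)) gs.
have hsum : (\sum_(c <- pmap (slice1 phi i 1) cs) wt c.2 < 2 ^ n)%N.
  have : ((\sum_(c <- pmap (slice1 phi i 1) cs) wt c.2) * 2 <= \sum_(g <- gs) wt g)%N.
    rewrite sum_pmap big_map big_distrl /=; apply: leq_sum => g _.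
    case hh: (has (fun x => lin phi x != 0) g); first exact: (slice_wtB i 1 (c := (0, g)) hh).
    by rewrite (slice_wtA i 1 (c := (0, g))) ?hh //= lin0 eq_sym (negbTE (oner_neq0 L)).
  move: hw; rewrite expnS; set S := (\sum_(c <- _) _)%N; set T := (\sum_(g <- _) _)%N.
  set P := (2 ^ n)%N; lia.
have [w hw'] := AV hsum.
exists (xt phi i 1 + insc phi i w); split.
  move=> hin; have := inspan_lin hin hphi; rewrite linDD lin_xt // lin_insc // addr0.
  by apply/eqP; exact: oner_neq0.
move=> g hg hin.
have hin' : inspan g (xt phi i 1 + insc phi i w - 0) by rewrite subr0.
have [c' [e hc']] := @slice_mem _ phi i 1 w (0, g) hu hin'.
apply: (hw' c') hc'; rewrite mem_pmap -e; apply: map_f.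
exact: (map_f (fun g => (0 : 'rV[L]_n.+1, g)) hg).
Qed.


Lemma size_ie m : size (index_enum 'I_m) = m.
Proof. by rewrite -sum1_size sum1_card card_ord. Qed.

Lemma wt_size n (g : seq 'rV[L]_n) : (wt g <= 2 ^ size g)%N.
Proof. by rewrite /wt leq_exp2l // count_size. Qed.

Lemma greedy n (F0 : seq 'rV[L]_n) (Fs : seq (seq 'rV[L]_n)) (m : nat) :
  (forall j, (j < m)%N -> (size F0 + j < n)%N /\
      (\sum_(f <- Fs) 2 ^ (size f + j) < 2 ^ n)%N) ->
  exists c : 'I_m -> 'rV[L]_n, forall f, f \in F0 :: Fs ->
    forall d : 'I_m -> L, inspan f (\sum_(l < m) d l *: c l) -> forall l, d l = 0.
Proof.
elim: m => [|m IH] hyp.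
  by exists (fun _ => 0) => f _ d _ [].
have [c hc] := IH (fun j hj => hyp j (ltnW hj)).
have [h1 h2] := hyp m (ltnSn m).
set cs := map c (index_enum 'I_m).
have hcs : size cs = m by rewrite size_map size_ie.
have s1 : (size (F0 ++ cs) < n)%N by rewrite size_cat hcs.
have s2 : (\sum_(g <- map (fun f => f ++ cs) Fs) wt g < 2 ^ n)%N.
  apply: leq_ltn_trans h2; rewrite big_map; apply: leq_sum => f _.
  by apply: (leq_trans (wt_size _)); rewrite size_cat hcs.
have [v [hv1 hv2]] := AVOID s1 s2.
exists (fun l => if unlift ord0 l is Some l' then c l' else v) => f hf d.
rewrite big_ord_recl unlift_none.
under eq_bigr do rewrite liftK.
set y := \sum_(i < m) _.
have hy : inspan cs y by apply: inspan_sum.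
have hvf : ~ inspan (f ++ cs) v.
  move: hf; rewrite inE => /orP [/eqP ->|hf] //.
  by apply: hv2; apply: (map_f (fun f => f ++ cs) hf).
move=> hin.
have d0 : d ord0 = 0.
  case: (eqVneq (d ord0) 0) => // hne; exfalso; apply: hvf.
  have hu : d ord0 \is a GRing.unit := HL hne.
  have -> : v = (d ord0)^-1 *: (d ord0 *: v + y) + - ((d ord0)^-1 *: y).
    by rewrite scalerDr scalerA mulVr // scale1r addrK.
  by apply: inspan_cat; [apply: inspanZ | apply: inspanN; apply: inspanZ].
move: hin; rewrite d0 scale0r add0r => hin.
have := hc f hf (fun l => d (lift ord0 l)) hin.
by move=> hd l; case: (unliftP ord0 l) => [l' ->|->].
Qed.

End Span.

Unset Implicit Arguments.

Theorem lemma3p1 (L : unitRingType) (HL : skew_field L) (a b : nat)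
  (ha : (2 <= a)%N) (hb : (b < a)%N)
  (B B1 B2 B3 : 'rV[L]_(a.+1) -> Prop) (k1 k2 k3 : nat)
  (hB : vsub_of_dim B b.+1)
  (hB1 : vsub_of_dim B1 k1) (hk1 : (k1 <= b)%N)
  (hB2 : vsub_of_dim B2 k2) (hk2 : (k2 <= b)%N)
  (hB3 : vsub_of_dim B3 k3) (hk3 : (k3 <= b.-1)%N) :
  exists C : 'rV[L]_(a.+1) -> Prop,
    vsub_of_dim C (a - b)%N /\
    (forall v, C v -> (B v \/ B1 v \/ B2 v \/ B3 v) -> v = 0).
Proof.
case: hB => [f0 [_ e0]]; case: hB1 => [f1 [_ e1]].
case: hB2 => [f2 [_ e2]]; case: hB3 => [f3 [_ e3]].
pose F0 := map f0 (index_enum 'I_b.+1).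
pose F1 := map f1 (index_enum 'I_k1).
pose F2 := map f2 (index_enum 'I_k2).
pose F3 := map f3 (index_enum 'I_k3).
have conv : forall k (f : 'I_k -> 'rV[L]_a.+1) v, in_span f v ->
    inspan (map f (index_enum 'I_k)) v.
  by move=> k f v [c ->]; apply: inspan_sum.
have hyp : forall j, (j < a - b)%N -> (size F0 + j < a.+1)%N /\
    (\sum_(f <- [:: F1; F2; F3]) 2 ^ (size f + j) < 2 ^ a.+1)%N.
  move=> j hj; rewrite !big_cons big_nil /F0 /F1 /F2 /F3 !size_map !size_ie.
  split; first by move: hj hb; lia.
  have hP : forall k, (k <= b)%N -> (2 ^ (k + j) <= 2 ^ a.-1)%N.
    by move=> k hk; rewrite leq_exp2l //; move: hk hj hb; lia.
  have e4 : (2 ^ a.+1 = 2 ^ a.-1 * 4)%N.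
    by rewrite -(expnD 2 _ 2); congr (2 ^ _)%N; move: ha; lia.
  have := hP _ hk1; have := hP _ hk2; have := hP k3 (leq_trans hk3 (leq_pred b)).
  have P0 : (0 < 2 ^ a.-1)%N by rewrite expn_gt0.
  rewrite e4; move: P0; move: (2 ^ (k1 + j))%N (2 ^ (k2 + j))%N (2 ^ (k3 + j))%N (2 ^ a.-1)%N.
  move=> x y z P; lia.
have [c hc] := @greedy L HL _ F0 [:: F1; F2; F3] (a - b) hyp.
exists (in_span c); split.
  exists c; split => // d hd l.
  apply: (hc F0 (mem_head _ _) d); rewrite hd; exact: inspan0.
move=> v [d ->] hv.
have hz : forall f, f \in [:: F0; F1; F2; F3] -> inspan f (\sum_(l < a - b) d l *: c l) ->
    \sum_(l < a - b) d l *: c l = 0.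
  move=> f hf hin; rewrite big1 // => l _; by rewrite (hc f hf d hin l) scale0r.
case: hv => [/e0 /conv|[/e1 /conv|[/e2 /conv|/e3 /conv]]]; apply: hz;
  by rewrite !inE eqxx ?orbT.
Qed.
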